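(* For every $\Delta \ge 1$ there is a local algorithm, using only a port numbering (no unique identifiers), that on every weakly $2$-coloured graph $\mathcal{G}=(V,E)$ without isolated nodes and of maximum degree at most $\Delta$ computes a spanning forest of $\mathcal{G}$ in which every component is a star with at least two nodes (i.e. a rooted tree of depth exactly $1$: a root with at least one child, all children being leaves), with each node knowing whether it is a root or a leaf and, for leaves, the port leading to its root.
   Context: Model: a graph $\mathcal{G}=(V,E)$ without isolated nodes is a distributed system; every node runs the same deterministic algorithm. Communication is synchronous: in each round every node receives messages from its neighbours, performs local computation, and sends messages to its neighbours. Each node knows its degree, its own input label (e.g. its colour), and the global degree bound $\Delta$. A local algorithm is one that terminates after $T$ rounds, where $T$ may depend on $\Delta$ but not on the number of nodes. A port numbering means each node has a fixed ordering (numbering $1,\dots,\deg(v)$) of its incident edges, known to it; nodes have no identifiers. A weak $2$-colouring assigns each node black or white so that every non-isolated node has at least one neighbour of the opposite colour; it is given as input. *)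

(* Defs.v *)
From mathcomp Require Import all_boot.
Set Implicit Arguments.
Unset Strict Implicit.
Unset Printing Implicit Defensive.

(* Node v has degree [deg v]; its ports are
   0, ..., deg v - 1.  [nbr v i] is the neighbour reached through port i of v,
   and [bport v i] is the port number at [nbr v i] of the same edge. *)
Definition port_graph (V : finType) (deg : V -> nat) (nbr : V -> nat -> V)
    (bport : V -> nat -> nat) : Prop :=
  [/\
      forall v i, i < deg v -> nbr v i <> v,
      forall v i j, i < deg v -> j < deg v -> nbr v i = nbr v j -> i = j &
      forall v i, i < deg v ->
        bport v i < deg (nbr v i) /\ nbr (nbr v i) (bport v i) = v].

(* weak 2-colouring (true = black, false = white): every node has a neighbour
   of the opposite colour *)
Definition weak2col (V : finType) (deg : V -> nat) (nbr : V -> nat -> V)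
    (col : V -> bool) : Prop :=
  forall v, exists2 i, i < deg v & col (nbr v i) != col v.

Inductive role := Root | Leaf of nat.  (* Leaf p : p = port leading to the root *)

Record LocalAlg := {
  St : Type;
  Msg : Type;
  init : nat -> bool -> St;        (* initial state from (degree, input colour) *)
  send : St -> nat -> Msg;         (* message sent on a given outgoing port *)
  step : St -> seq Msg -> St;      (* new state from messages received on ports 0..deg-1 *)
  rounds : nat;
  output : St -> role
}.

Fixpoint run (A : LocalAlg) (V : finType) (deg : V -> nat) (nbr : V -> nat -> V)
    (bport : V -> nat -> nat) (col : V -> bool) (t : nat) : V -> St A :=
  match t with
  | 0 => fun v => @init A (deg v) (col v)
  | t'.+1 => fun v =>
      let s := run A deg nbr bport col t' in
      @step A (s v) [seq @send A (s (nbr v j)) (bport v j) | j <- iota 0 (deg v)]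
  end.

(* The
   forest edges are the (leaf, port) edges. *)
Definition star_forest (V : finType) (deg : V -> nat) (nbr : V -> nat -> V)
    (bport : V -> nat -> nat) (o : V -> role) : Prop :=
  forall v, match o v with
            | Root => exists2 j, j < deg v & o (nbr v j) = Leaf (bport v j)
            | Leaf i => i < deg v /\ o (nbr v i) = Root
            end.

(* Main.v *)
Require Import Defs.
From mathcomp Require Import all_boot.
Set Implicit Arguments.
Unset Strict Implicit.

Record st := mkSt { sc : bool; sp : nat; sq : nat; sch : bool; sroot : bool }.

Definition algA : LocalAlg := {|
  St := st;
  Msg := (bool * bool * bool * bool)%type;
  init := fun _ c => mkSt c 0 0 false false;
  send := fun s i => (sc s, sp s == i, sch s, sroot s);
  step := fun s ms => mkSt (sc s)
     (find (fun m : bool * bool * bool * bool => m.1.1.1 != sc s) ms)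
     (find (fun m : bool * bool * bool * bool => m.1.1.2) ms)
     (has (fun m : bool * bool * bool * bool => m.1.1.2) ms)
     (if sc s then has (fun m : bool * bool * bool * bool => m.1.1.2 && ~~ m.1.2) ms
      else has (fun m : bool * bool * bool * bool => m.1.1.2 && ~~ m.2) ms);
  rounds := 4;
  output := fun s => if sroot s then Root else if sc s then Leaf (sp s)
                     else if sch s then Leaf (sq s) else Leaf (sp s)
|}.

Lemma has_iotaP (a : pred nat) n :
  reflect (exists2 j, j < n & a j) (has a (iota 0 n)).
Proof.
apply: (iffP hasP) => [[j]|[j]]; rewrite ?mem_iota => Hj Ha; exists j => //.
by rewrite mem_iota.
Qed.

Lemma find_iota (a : pred nat) n : has a (iota 0 n) ->
  find a (iota 0 n) < n /\ a (find a (iota 0 n)).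
Proof.
move=> h; have Hlt : find a (iota 0 n) < n.
  by rewrite -[n in _ < n](size_iota 0) -has_find.
split=> //; have := nth_find 0 h; by rewrite nth_iota.
Qed.

Fact runA_key : unit. Proof. exact: tt. Qed.
Definition runA V deg nbr bport col := locked_with runA_key (@run algA V) deg nbr bport col.

Lemma runA_run V deg nbr bport col t v :
  @runA V deg nbr bport col t v = run algA deg nbr bport col t v.
Proof. by rewrite /runA unlock. Qed.

Lemma runS V deg nbr bport col t v :
  @runA V deg nbr bport col t.+1 v =
  @step algA (runA deg nbr bport col t v)
    [seq @send algA (runA deg nbr bport col t (nbr v j)) (bport v j) | j <- iota 0 (deg v)].
Proof. by rewrite /runA !unlock. Qed.

Lemma sc_run V deg nbr bport col t v : sc (@runA V deg nbr bport col t v) = col v.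
Proof. rewrite /runA unlock; by elim: t v => [|t IH] v //=; rewrite IH. Qed.

Definition Pp (V : finType) (deg : V -> nat) (nbr : V -> nat -> V) (col : V -> bool) v :=
  find (fun j => col (nbr v j) != col v) (iota 0 (deg v)).

Lemma spE V deg nbr bport col t v :
  sp (@runA V deg nbr bport col t.+1 v) = Pp deg nbr col v.
Proof.
rewrite runS /= find_map /Pp; apply: eq_find => j /=.
by rewrite !sc_run.
Qed.

Definition aa (V : finType) (deg : V -> nat) (nbr : V -> nat -> V)
  (bport : V -> nat -> nat) (col : V -> bool) v j :=
  Pp deg nbr col (nbr v j) == bport v j.

Definition Ch V deg nbr bport col v := has (@aa V deg nbr bport col v) (iota 0 (deg v)).

Lemma schE V deg nbr bport col t v :
  sch (@runA V deg nbr bport col t.+2 v) = Ch deg nbr bport col v.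
Proof. by rewrite runS /= has_map /Ch; apply: eq_has => j /=; rewrite spE. Qed.

Lemma sqE V deg nbr bport col t v :
  sq (@runA V deg nbr bport col t.+2 v) = find (aa deg nbr bport col v) (iota 0 (deg v)).
Proof. by rewrite runS /= find_map; apply: eq_find => j /=; rewrite spE. Qed.

Definition Rb V deg nbr bport col v :=
  has (fun j => @aa V deg nbr bport col v j && ~~ Ch deg nbr bport col (nbr v j))
      (iota 0 (deg v)).

Definition Rw V deg nbr bport col v :=
  has (fun j => @aa V deg nbr bport col v j && ~~ Rb deg nbr bport col (nbr v j))
      (iota 0 (deg v)).

Lemma srootB (V : finType) deg nbr bport (col : V -> bool) t v : col v ->
  sroot (@runA V deg nbr bport col t.+3 v) = Rb deg nbr bport col v.
Proof.
move=> Hc; rewrite runS /= sc_run Hc has_map /Rb; apply: eq_has => j /=.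
by rewrite spE schE.
Qed.

Lemma P_spec (V : finType) deg nbr (col : V -> bool) v : @weak2col V deg nbr col ->
  Pp deg nbr col v < deg v /\ col (nbr v (Pp deg nbr col v)) != col v.
Proof.
move=> W; apply: find_iota; apply/has_iotaP; case: (W v) => i Hi Hc; by exists i.
Qed.

Lemma bport_inv V deg nbr bport v i : @port_graph V deg nbr bport -> i < deg v ->
  bport (nbr v i) (bport v i) = i.
Proof.
case=> _ H2 H3 Hi; have [Hk Hn] := H3 _ _ Hi.
have [Hk' Hn'] := H3 _ _ Hk; rewrite Hn in Hk' Hn'.
exact: (H2 v _ _ Hk' Hi Hn'). Qed.

Lemma aa_col V deg nbr bport col v j : @port_graph V deg nbr bport ->
  weak2col deg nbr col -> j < deg v -> aa deg nbr bport col v j ->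
  col (nbr v j) != col v.
Proof.
move=> G W Hj /eqP Ha; have [_ Hc] := P_spec (nbr v j) W.
case: G => _ _ H3; have [_ Hn] := H3 _ _ Hj.
by rewrite Ha Hn eq_sym in Hc.
Qed.

Lemma srootW V deg nbr bport col t v : port_graph deg nbr bport ->
  weak2col deg nbr col -> col v = false ->
  sroot (@runA V deg nbr bport col t.+4 v) = Rw deg nbr bport col v.
Proof.
move=> G W Hc; rewrite runS /= sc_run Hc has_map /Rw; apply: eq_in_has => j.
rewrite mem_iota /= => Hj; rewrite spE -/(aa deg nbr bport col v j).
case Ha: (aa deg nbr bport col v j) => //=.
have := aa_col G W Hj Ha; rewrite Hc /= => Hu.
by rewrite srootB //; move: Hu; case: (col _).
Qed.

Theorem mainTheorem4 (Delta : nat) : 1 <= Delta ->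
  exists A : LocalAlg,
    forall (V : finType) (deg : V -> nat) (nbr : V -> nat -> V)
           (bport : V -> nat -> nat) (col : V -> bool),
      port_graph deg nbr bport ->
      (forall v, 1 <= deg v) ->
      (forall v, deg v <= Delta) ->
      weak2col deg nbr col ->
      star_forest deg nbr bport
        (fun v => @output A (run A deg nbr bport col (@rounds A) v)).
Proof.
move=> _; exists algA => V deg nbr bport col G _ _ W v.
have oE : forall u, @output algA (run algA deg nbr bport col (@rounds algA) u) =
   if (if col u then Rb deg nbr bport col u else Rw deg nbr bport col u) then Root
   else if col u then Leaf (Pp deg nbr col u)
   else if Ch deg nbr bport col u then Leaf (find (aa deg nbr bport col u) (iota 0 (deg u)))
   else Leaf (Pp deg nbr col u).
  move=> u; rewrite -runA_run /=.
  case Hc: (col u).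
    by rewrite srootB // sc_run Hc spE.
  by rewrite srootW // sc_run Hc spE schE sqE.
have [HPl HPc] := P_spec v W.
have Hinv := @bport_inv V deg nbr bport v _ G HPl.
case: G => G1 G2 G3; have [Hk Hn] := G3 _ _ HPl.
rewrite oE; case Hc: (col v).
- case HR: (Rb deg nbr bport col v).
  + case/has_iotaP: HR => j Hj /andP[Ha HnC].
    exists j => //; rewrite oE.
    have := aa_col (And3 G1 G2 G3) W Hj Ha; rewrite Hc => Hu0.
    have Hu : col (nbr v j) = false by move: Hu0; case: (col _).
    rewrite Hu.
    have -> : Rw deg nbr bport col (nbr v j) = false.
      apply/negbTE/negP => /hasP[k Hk0 /andP[Hak _]]; move/negP: HnC; apply.
      by apply/hasP; exists k.
    by rewrite (negbTE HnC); move/eqP: Ha => ->.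
  + split=> //; rewrite oE.
    have Hu : col (nbr v (Pp deg nbr col v)) = false by move: HPc; rewrite Hc; case: (col _).
    rewrite Hu; have -> // : Rw deg nbr bport col (nbr v (Pp deg nbr col v)).
    apply/has_iotaP; exists (bport v (Pp deg nbr col v)) => //.
    by rewrite /aa Hn Hinv eqxx /= HR.
- case HR: (Rw deg nbr bport col v).
  + case/has_iotaP: HR => j Hj /andP[Ha HnR].
    exists j => //; rewrite oE.
    have := aa_col (And3 G1 G2 G3) W Hj Ha; rewrite Hc => Hu.
    have Hu' : col (nbr v j) = true by move: Hu; case: (col _).
    by rewrite Hu' (negbTE HnR); move/eqP: Ha => ->.
  + case HC: (Ch deg nbr bport col v).
    * have [Hql Hqa] := find_iota HC; split=> //; rewrite oE.
      have := aa_col (And3 G1 G2 G3) W Hql Hqa; rewrite Hc => Hu.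
      have Hu' : col (nbr v (find (aa deg nbr bport col v) (iota 0 (deg v)))) = true
        by move: Hu; case: (col _).
      rewrite Hu'; case HRb: (Rb _ _ _ _ _) => //.
      move: HR; rewrite /Rw => /negbT/negP; case; apply/has_iotaP.
      by eexists; [exact: Hql|]; rewrite Hqa HRb.
    * split=> //; rewrite oE.
      have Hu : col (nbr v (Pp deg nbr col v)) = true by move: HPc; rewrite Hc; case: (col _).
      rewrite Hu; have -> // : Rb deg nbr bport col (nbr v (Pp deg nbr col v)).
      apply/has_iotaP; exists (bport v (Pp deg nbr col v)) => //.
      by rewrite /aa Hn Hinv eqxx /= HC.
Qed.
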